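(* Let $\alpha\in\mathbb{R}$ and $0<\beta\le\frac14$. Then $\Theta_\alpha$ maps $\mathfrak{T}_1(F_1(\alpha,2\beta))$ bijectively onto $\mathfrak{T}_2(F_2(\alpha,2\beta))$; $\Theta_\alpha(\mathfrak{S}_1(F_1(\alpha,\beta)))=\mathfrak{S}_2(F_2(\alpha,\beta))$; and $\Theta_\alpha(|p|^2)=|\Theta_\alpha(p)|^2$ for every $p\in\mathfrak{T}_1(F_1(\alpha,\beta))$.
   Context: $\mathbb{T}=\mathbb{R}/\mathbb{Z}$, $e_j(x)=e^{2\pi i jx}$, $e_{(j,k)}(x,y)=e_j(x)e_k(y)$. $\mathfrak{T}_d$ is the algebra of trigonometric polynomials on $\mathbb{T}^d$ (finite frequency set); for $F\subseteq\mathbb{Z}^d$, $\mathfrak{T}_d(F)=\{t\in\mathfrak{T}_d:\mathrm{freq}(t)\subseteq F\}$ and $\mathfrak{S}_d(F)=\{|p|^2:p\in\mathfrak{T}_d(F)\}$. For $\alpha\in\mathbb{R}$, $\theta_\alpha(j)$ is the smallest integer minimizing $|\theta_\alpha(j)-j\alpha|$, and $\Theta_\alpha:\mathfrak{T}_1\to\mathfrak{T}_2$ is $\Theta_\alpha(t)(x,y)=\sum_{j}\widehat t(j)e_j(x)e_{\theta_\alpha(j)}(y)$. For $\beta>0$: $F_1(\alpha,\beta)=\{j\in\mathbb{Z}:|\theta_\alpha(j)-j\alpha|<\beta\}$ and $F_2(\alpha,\beta)=\{(j,k)\in\mathbb{Z}^2:|k-j\alpha|<\beta\}$. *)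

(* Defs.v *)
From HB Require Import structures.
From mathcomp Require Import all_boot all_order all_algebra.
From Stdlib Require Import Reals ZArith List ClassicalEpsilon.
Set Implicit Arguments. Unset Strict Implicit. Unset Printing Implicit Defensive.
Import GRing.Theory Num.Theory.

Definition is_theta (a : R) (j k : Z) : Prop :=
  (forall m : Z, (Rabs (IZR k - IZR j * a) <= Rabs (IZR m - IZR j * a))%R) /\
  (forall m : Z, (Rabs (IZR m - IZR j * a) <= Rabs (IZR k - IZR j * a))%R -> (k <= m)%Z).

Definition theta (a : R) (j : Z) : Z := epsilon (inhabits 0%Z) (is_theta a j).

Definition F1 (a b : R) (j : Z) : Prop := (Rabs (IZR (theta a j) - IZR j * a) < b)%R.
Definition F2 (a b : R) (jk : Z * Z) : Prop := (Rabs (IZR jk.2 - IZR jk.1 * a) < b)%R.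

(* A trigonometric polynomial on T^d is identified with its (finitely
   supported) Fourier coefficient function Z^d -> C (I = Z or Z*Z). *)
Definition finsupp (C : numClosedFieldType) (I : Type) (t : I -> C) : Prop :=
  exists l : list I, forall i, t i <> (GRing.zero : C) -> In i l.

Definition inT (C : numClosedFieldType) (I : Type) (F : I -> Prop) (t : I -> C) : Prop :=
  finsupp t /\ (forall i, t i <> (GRing.zero : C) -> F i).

Definition supp (C : numClosedFieldType) (I : Type) (t : I -> C) : list I :=
  epsilon (inhabits nil) (fun l => NoDup l /\ forall i, t i <> (GRing.zero : C) -> In i l).

(* Fourier coefficients of |p|^2 = p * conj p :  k |-> sum_j p(j+k) conj(p(j)) *)
Definition sq1 (C : numClosedFieldType) (p : Z -> C) : Z -> C :=
  fun k => \big[GRing.add/GRing.zero]_(j <- supp p) GRing.mul (p (j + k)%Z) (Num.conj (p j)).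

Definition sq2 (C : numClosedFieldType) (q : Z * Z -> C) : Z * Z -> C :=
  fun k => \big[GRing.add/GRing.zero]_(j <- supp q) GRing.mul (q ((j.1 + k.1)%Z, (j.2 + k.2)%Z)) (Num.conj (q j)).

(* Theta_alpha(t) = sum_j hat t(j) e_{(j, theta_alpha(j))} *)
Definition Theta (C : numClosedFieldType) (a : R) (t : Z -> C) : Z * Z -> C :=
  fun jk => if Z.eqb jk.2 (theta a jk.1) then t jk.1 else GRing.zero.

(* Main.v *)
Require Import Defs.
From HB Require Import structures.
From mathcomp Require Import all_boot all_order all_algebra.
From Stdlib Require Import Reals ZArith List ClassicalEpsilon.
From Stdlib Require Import Permutation FinFun FunctionalExtensionality Lra Lia.

Import GRing.Theory Num.Theory.

Ltac rabs := unfold Rabs in *; repeat match goal with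
  | |- context [Rcase_abs ?t] => destruct (Rcase_abs t)
  | H : context [Rcase_abs ?t] |- _ => destruct (Rcase_abs t) end; lra.

Section Reals_part.
Local Open Scope R_scope.

Lemma int_small (z : Z) : Rabs (IZR z) < 1 -> z = 0%Z.
Proof.
intro H. apply Rabs_def2 in H. destruct H as [H1 H2].
assert (-1 < z)%Z by (apply lt_IZR; simpl; lra).
assert (z < 1)%Z by (apply lt_IZR; simpl; lra). lia.
Qed.

Lemma theta_ex (a : R) (j : Z) : exists k, is_theta a j k.
Proof.
set (x := IZR j * a).
destruct (archimed x) as [H1 H2].
set (n := (up x - 1)%Z).
assert (Hn : IZR n = IZR (up x) - 1) by (unfold n; rewrite minus_IZR; simpl; lra).
destruct (Rle_lt_dec (x - IZR n) (IZR n + 1 - x)) as [Hc|Hc].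
- exists n. split.
  + intro m. destruct (Z_le_gt_dec m n) as [Hm|Hm].
    * apply IZR_le in Hm. fold x. rabs.
    * assert (Hm' : (n + 1 <= m)%Z) by lia. apply IZR_le in Hm'.
      rewrite plus_IZR in Hm'. fold x. rabs.
  + intros m Hm. destruct (Z_le_gt_dec n m) as [|Hm']; auto. exfalso.
    assert (Hm2 : (m <= n - 1)%Z) by lia. apply IZR_le in Hm2.
    rewrite minus_IZR in Hm2. fold x in Hm. rabs.
- exists (n + 1)%Z. unfold is_theta. rewrite plus_IZR. split.
  + intro m. destruct (Z_le_gt_dec m n) as [Hm|Hm].
    * apply IZR_le in Hm. fold x. rabs.
    * assert (Hm' : (n + 1 <= m)%Z) by lia. apply IZR_le in Hm'.
      rewrite plus_IZR in Hm'. fold x. rabs.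
  + intros m Hm. destruct (Z_le_gt_dec (n+1) m) as [|Hm']; auto. exfalso.
    assert (Hm2 : (m <= n)%Z) by lia. apply IZR_le in Hm2.
    fold x in Hm. rabs.
Qed.

Lemma theta_spec (a : R) (j : Z) : is_theta a j (theta a j).
Proof. unfold theta. apply epsilon_spec. apply theta_ex. Qed.

Lemma theta_uniq (a : R) (j k : Z) :
  Rabs (IZR k - IZR j * a) < / 2 -> k = theta a j.
Proof.
intro H. destruct (theta_spec a j) as [H1 _]. specialize (H1 k).
assert (Hz : (k - theta a j = 0)%Z). { apply int_small. rewrite minus_IZR. rabs. }
lia.
Qed.

Lemma theta_add (a b : R) (j k : Z) : b <= / 4 ->
  F1 a b j -> F1 a b (j + k) -> theta a (j + k) = (theta a j + theta a k)%Z.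
Proof.
unfold F1. intros hb H1 H2.
assert (E : (theta a (j + k) - theta a j)%Z = theta a k).
{ apply theta_uniq. rewrite minus_IZR. rewrite plus_IZR in H2. rabs. }
lia.
Qed.

End Reals_part.

Section Sums.
Local Open Scope ring_scope.
Variable C : numClosedFieldType.

Lemma bs_filter (I : Type) (L : list I) (F : I -> C) :
  \big[GRing.add/GRing.zero]_(j <- L) F j =
  \big[GRing.add/GRing.zero]_(j <- List.filter (fun x => F x != 0) L) F j.
Proof.
elim: L => [|x L IH] /=; first by [].
rewrite big_cons. case: eqP => [->|_] /=; rewrite ?big_cons IH //.
by rewrite add0r.
Qed.

Lemma bs_perm (I : Type) (L1 L2 : list I) (F : I -> C) : Permutation L1 L2 ->
  \big[GRing.add/GRing.zero]_(j <- L1) F j = \big[GRing.add/GRing.zero]_(j <- L2) F j.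
Proof.
elim => [|x l l' _ IH|x y l|l l' l'' _ IH1 _ IH2].
- by [].
- by rewrite !big_cons IH.
- by rewrite !big_cons addrCA.
- by rewrite IH1 IH2.
Qed.

Lemma bs_indep (I : Type) (L1 L2 : list I) (F : I -> C) :
  NoDup L1 -> NoDup L2 -> (forall x, F x <> 0 -> In x L1) -> (forall x, F x <> 0 -> In x L2) ->
  \big[GRing.add/GRing.zero]_(j <- L1) F j = \big[GRing.add/GRing.zero]_(j <- L2) F j.
Proof.
move=> N1 N2 H1 H2. rewrite [LHS]bs_filter [RHS]bs_filter. apply: bs_perm.
apply: NoDup_Permutation; try apply: NoDup_filter => //.
move=> x; rewrite !filter_In; split; move=> [_ Hx]; split => //.
- by apply: H2; apply/eqP.
- by apply: H1; apply/eqP.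
Qed.

Lemma bs_map (I J : Type) (L : list I) (f : I -> J) (G : J -> C) :
  \big[GRing.add/GRing.zero]_(j <- List.map f L) G j =
  \big[GRing.add/GRing.zero]_(j <- L) G (f j).
Proof. elim: L => [|x L IH]; first by rewrite /= !big_nil. rewrite [List.map _ _]/= !big_cons IH. by []. Qed.

Lemma supp_spec (I : Type) (dec : forall x y : I, {x = y} + {x <> y}) (t : I -> C) :
  finsupp t -> NoDup (supp t) /\ forall i, t i <> 0 -> In i (supp t).
Proof.
move=> [l Hl]. unfold supp. apply: (epsilon_spec (inhabits nil) (fun l => NoDup l /\ forall i, t i <> 0 -> In i l)).
exists (nodup dec l). split; first by apply: NoDup_nodup.
move=> i Hi. apply/nodup_In. by apply: Hl.
Qed.

End Sums.
Arguments supp_spec {C I} dec {t}.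
Arguments bs_indep {C I L1} L2 {F}.

Lemma part1 (C : numClosedFieldType) (a b : R) (t : Z -> C) :
  inT (F1 a b) t -> inT (F2 a b) (Theta a t).
Proof.
move=> [[l Hl] HF]. split.
- exists (List.map (fun j => (j, theta a j)) l). move=> [j k] H.
  rewrite /Theta /= in H. case: Z.eqb_spec H => [->|_] H //.
  apply: in_map. by apply: Hl.
- move=> [j k] H. rewrite /Theta /= in H. case: Z.eqb_spec H => [->|_] H //.
  by apply: HF.
Qed.

Lemma part3 (C : numClosedFieldType) (a b : R) (hb : (b <= / 2)%R) (u : Z * Z -> C) :
  inT (F2 a b) u -> exists t : Z -> C, inT (F1 a b) t /\ Theta a t = u.
Proof.
move=> [[l Hl] HF]. exists (fun j => u (j, theta a j)). split.
- split.
  + exists (List.map fst l). move=> j H. apply/in_map_iff. exists (j, theta a j).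
    split => //. by apply: Hl.
  + move=> j H. exact: (HF _ H).
- apply: functional_extensionality => -[j k]. rewrite /Theta /=.
  case: Z.eqb_spec => [->|Hne] //.
  case: (eqVneq (u (j, k)) GRing.zero) => [->|Hnz] //.
  exfalso. apply: Hne. apply: theta_uniq.
  have := HF _ (elimN eqP Hnz). rewrite /F2 /=. lra.
Qed.

Arguments part1 {C a b t}.
Arguments part3 {C a b} hb {u}.
Lemma Zpair_dec : forall x y : Z * Z, {x = y} + {x <> y}.
Proof. decide equality; apply Z.eq_dec. Qed.

Lemma part5 (C : numClosedFieldType) (a b : R) (hb : (b <= / 4)%R) (p : Z -> C) :
  inT (F1 a b) p -> Theta a (sq1 p) = sq2 (Theta a p).
Proof.
move=> Hp. have Hq := part1 Hp.
have [Np Sp] := supp_spec Z.eq_dec (proj1 Hp).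
have [Nq Sq] := supp_spec Zpair_dec (proj1 Hq).
apply: functional_extensionality => -[k1 k2]. rewrite /sq2.
rewrite (bs_indep (List.map (fun j => (j, theta a j)) (supp p))) //; last first.
- move=> [j k] H.
  have H' : Theta a p (j, k) <> GRing.zero.
  { move=> E; apply: H; by rewrite E conjC0 GRing.mulr0. }
  rewrite /Theta /= in H'. case: Z.eqb_spec H' => [->|_] H' //.
  apply: in_map. by apply: Sp.
- move=> J H. apply: Sq => E; apply: H; by rewrite E conjC0 GRing.mulr0.
- apply: Injective_map_NoDup => //. move=> x y E. by case: E.
rewrite bs_map. rewrite /Theta /= /sq1.
have key : forall j, p j <> GRing.zero -> p (j + k1)%Z <> GRing.zero ->
   theta a (j + k1) = (theta a j + theta a k1)%Z.
{ move=> j H1 H2. apply: (@theta_add a b j k1 hb); by apply: (proj2 Hp). }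
case: Z.eqb_spec => Hk.
- apply: eq_bigr => j _. rewrite Z.eqb_refl.
  case: (eqVneq (p j) GRing.zero) => [->|H1]; first by rewrite conjC0 !GRing.mulr0.
  case: (eqVneq (p (j + k1)%Z) GRing.zero) => [->|H2].
  { case: ifP => _; by rewrite GRing.mul0r. }
  rewrite (key j (elimN eqP H1) (elimN eqP H2)) Hk Z.eqb_refl //.
- symmetry. apply: big1 => j _. rewrite Z.eqb_refl.
  case: (eqVneq (p j) GRing.zero) => [->|H1]; first by rewrite conjC0 !GRing.mulr0.
  case: (eqVneq (p (j + k1)%Z) GRing.zero) => [->|H2].
  { case: ifP => _; by rewrite GRing.mul0r. }
  rewrite (key j (elimN eqP H1) (elimN eqP H2)).
  case: Z.eqb_spec => E; last by rewrite GRing.mul0r.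
  exfalso; apply: Hk; lia.
Qed.

Arguments part5 {C a b} hb {p}.
Arguments theta_add {a b j k}.

Theorem lemma4 (C : numClosedFieldType) (a b : R)
  (hb0 : (0 < b)%R) (hb : (b <= / 4)%R) :
  (* Theta_alpha maps T_1(F_1(alpha,2beta)) into T_2(F_2(alpha,2beta)) ... *)
  (forall t : Z -> C, inT (F1 a (2 * b)) t -> inT (F2 a (2 * b)) (Theta a t)) /\
  (* ... injectively ... *)
  (forall t1 t2 : Z -> C, inT (F1 a (2 * b)) t1 -> inT (F1 a (2 * b)) t2 ->
     Theta a t1 = Theta a t2 -> t1 = t2) /\
  (* ... and onto *)
  (forall u : Z * Z -> C, inT (F2 a (2 * b)) u ->
     exists t : Z -> C, inT (F1 a (2 * b)) t /\ Theta a t = u) /\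
  (* Theta_alpha(S_1(F_1(alpha,beta))) = S_2(F_2(alpha,beta)) *)
  (forall u : Z * Z -> C,
     (exists p : Z -> C, inT (F1 a b) p /\ u = Theta a (sq1 p)) <->
     (exists q : Z * Z -> C, inT (F2 a b) q /\ u = sq2 q)) /\
  (* Theta_alpha(|p|^2) = |Theta_alpha(p)|^2 *)
  (forall p : Z -> C, inT (F1 a b) p -> Theta a (sq1 p) = sq2 (Theta a p)).
Proof.
split; [|split; [|split; [|split]]].
- move=> t; exact: part1.
- move=> t1 t2 _ _ H. apply: functional_extensionality => j.
  have := f_equal (fun f => f (j, theta a j)) H. by rewrite /Theta /= Z.eqb_refl.
- move=> u; apply: part3. lra.
- move=> u; split.
  + move=> [p [Hp ->]]. exists (Theta a p). split; first exact: part1.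
    exact: (part5 hb).
  + move=> [q [Hq ->]]. have [p [Hp E]] := part3 (ltac:(lra) : (b <= / 2)%R) Hq.
    exists p. split => //. rewrite (part5 hb Hp) E //.
- move=> p; exact: part5.
Qed.
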